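(* Let $G=(V,E)$ be a forest with $|V|=n$. For every integer $k\ge 0$ with $2k\le n$, the coefficient of $p_{(2^k,1^{n-2k})}$ in the expansion of $X_G$ in the power-sum basis equals $(-1)^k m_k$, where $m_k$ is the number of $k$-matchings of $G$. Consequently the matching polynomial of $G$ is $$\mu_G(x)=\sum_{k}\bigl|c_{(2^k,1^{n-2k})}\bigr|\,x^k,$$ where $c_\lambda$ denotes the coefficient of $p_\lambda$ in $X_G$; in particular $\mu_G$ is determined by $X_G$.
   Context: For a graph $G=(V,E)$ with $V=\{v_1,\dots,v_n\}$, a proper coloring is a map $\kappa:V\to\mathbb{N}$ with $\kappa(u)\ne\kappa(v)$ whenever $(u,v)\in E$. The chromatic symmetric function is $X_G=\sum_\kappa x_{\kappa(v_1)}\cdots x_{\kappa(v_n)}$, summed over proper colorings. $p_m=\sum_{i\ge1}x_i^m$ and $p_\lambda=p_{\lambda_1}\cdots p_{\lambda_\ell}$ for a partition $\lambda$; the $p_\lambda$ form a basis of symmetric functions. The notation $(2^k,1^{j})$ denotes the partition with $k$ parts equal to $2$ and $j$ parts equal to $1$. A $k$-matching of $G$ is a set of $k$ edges, no two sharing an endpoint; the matching polynomial is $\mu_G(x)=\sum_k m_k x^k$ with $m_k$ the number of $k$-matchings. *)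

(* Defs.v *)
From HB Require Import structures.
From mathcomp Require Import all_boot all_order all_algebra.
From mathcomp Require Import mpoly.
Set Implicit Arguments. Unset Strict Implicit. Unset Printing Implicit Defensive.
Import GRing.Theory Num.Theory.
Local Open Scope ring_scope.

(* A simple graph: T finite vertex set, e symmetric irreflexive adjacency. *)

Definition forest (T : finType) (e : rel T) : Prop :=
  forall (x : T) (p : seq T),
    (2 <= size p)%N -> uniq (x :: p) -> path e x p -> ~~ e (last x p) x.

Definition is_edge (T : finType) (e : rel T) (s : {set T}) : bool :=
  [exists x, exists y, e x y && (s == [set x; y])].

Definition is_matching (T : finType) (e : rel T) (M : {set {set T}}) : bool :=
  [forall s in M, is_edge e s] &&
  [forall s in M, forall t in M, (s != t) ==> [disjoint s & t]].

Definition nmatch (T : finType) (e : rel T) (k : nat) : nat :=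
  #|[set M : {set {set T}} | is_matching e M && (#|M| == k)]|.

Definition matching_poly (T : finType) (e : rel T) : {poly rat} :=
  \sum_(k < #|T|.+1) (nmatch e k)%:R *: 'X^k.

Definition proper_col (T : finType) (e : rel T) (N : nat)
  (kap : {ffun T -> 'I_N}) : bool :=
  [forall u, forall v, e u v ==> (kap u != kap v)].

Definition chromsym (T : finType) (e : rel T) (N : nat) : {mpoly rat[N]} :=
  \sum_(kap : {ffun T -> 'I_N} | proper_col e kap) \prod_(v : T) 'X_(kap v).

Definition psum (N i : nat) : {mpoly rat[N]} := \sum_(j < N) 'X_j ^+ i.

(* A partition of n is encoded by its multiplicity vector
   m : 'I_(n+1) -> 'I_(n+1), m i = number of parts equal to i. *)
Definition is_partn (n : nat) (m : {ffun 'I_n.+1 -> 'I_n.+1}) : bool :=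
  (m ord0 == 0 :> nat) && (\sum_(i < n.+1) i * m i == n)%N.

Definition plam (N n : nat) (m : {ffun 'I_n.+1 -> 'I_n.+1}) : {mpoly rat[N]} :=
  \prod_(i < n.+1) psum N i ^+ m i.

Definition lam21 (n k : nat) : {ffun 'I_n.+1 -> 'I_n.+1} :=
  [ffun i : 'I_n.+1 =>
     if (i == 1 :> nat) then inord (n - 2 * k)
     else if (i == 2 :> nat) then inord k else ord0].

Definition pexpansion (T : finType) (e : rel T) (N : nat)
  (c : {ffun 'I_#|T|.+1 -> 'I_#|T|.+1} -> rat) : Prop :=
  chromsym e N = \sum_(m | is_partn m) c m *: plam N m.

(* Main.v *)
Require Import Defs.
From HB Require Import structures.
From mathcomp Require Import all_boot all_order all_algebra.
From mathcomp Require Import mpoly.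
From mathcomp Require Import zify.
Set Implicit Arguments. Unset Strict Implicit. Unset Printing Implicit Defensive.
Import Order.TTheory GRing.Theory Num.Theory.
Local Open Scope ring_scope.

Section Coef.
Variable N : nat.
Implicit Types p q : {mpoly rat[N]}.

Definition nonneg p := forall a, 0 <= p@_a.

Lemma nonneg_mul p q : nonneg p -> nonneg q -> nonneg (p * q).
Proof.
move=> hp hq a; rewrite mcoeffM; apply: sumr_ge0 => k _; exact: mulr_ge0.
Qed.

Lemma nonneg_add p q : nonneg p -> nonneg q -> nonneg (p + q).
Proof. by move=> hp hq a; rewrite mcoeffD addr_ge0. Qed.

Lemma nonnegX (m : 'X_{1..N}) : nonneg 'X_[m].
Proof. by move=> a; rewrite mcoeffX ler0n. Qed.

Lemma nonneg1 : nonneg 1.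
Proof. by move=> a; rewrite mcoeff1 ler0n. Qed.

Lemma nonneg_exp p k : nonneg p -> nonneg (p ^+ k).
Proof.
move=> hp; elim: k => [|k ih]; first by rewrite expr0; exact: nonneg1.
by rewrite exprS; apply: nonneg_mul.
Qed.

Lemma mcoeffM_ge p q (b c : 'X_{1..N}) : nonneg p -> nonneg q ->
  p@_b * q@_c <= (p * q)@_(b + c).
Proof.
move=> hp hq.
pose r := q - q@_c *: 'X_[c].
have hr : nonneg r.
  move=> a; rewrite /r mcoeffB mcoeffZ mcoeffX.
  by case: eqP => [->|_]; rewrite ?mulr1 ?subrr // mulr0 subr0.
have E : p * q = q@_c *: (p * 'X_[c]) + p * r.
  by rewrite /r mulrDr mulrN scalerAr addrC subrK.
rewrite E mcoeffD mcoeffZ (addmC b c) mcoeffMX mulrC lerDl.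
exact: nonneg_mul.
Qed.

Lemma mcoeffM_nz p q (a : 'X_{1..N}) : (p * q)@_a != 0 ->
  exists b c, [/\ a = (b + c)%MM, p@_b != 0 & q@_c != 0].
Proof.
rewrite mcoeffM => h.
case: (boolP [exists k : 'X_{1..N < (mdeg a).+1, (mdeg a).+1},
   [&& a == (k.1 + k.2)%MM, p@_k.1 != 0 & q@_k.2 != 0]]).
  case/existsP => k /and3P [/eqP ha h1 h2].
  by exists (k.1 : 'X_{1..N}), (k.2 : 'X_{1..N}); split.
move=> hn; case/negP: h; rewrite big1 // => k hk.
apply/eqP; move/existsPn: hn => /(_ k); rewrite hk /= negb_and !negbK.
by case/orP => /eqP ->; rewrite ?mul0r ?mulr0.
Qed.

Lemma mcoeff_sum_nz (I : finType) (F : I -> {mpoly rat[N]}) a :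
  (\sum_i F i)@_a != 0 -> exists i, (F i)@_a != 0.
Proof.
rewrite raddf_sum => h.
case: (boolP [exists i, (F i)@_a != 0]) => [/existsP [i hi]|hn]; first by exists i.
case/negP: h; rewrite big1 // => i _; apply/eqP.
by move/existsPn: hn => /(_ i); rewrite negbK.
Qed.

End Coef.

Section BigVal.
Variables (R : Type) (idx : R) (op : Monoid.com_law idx).
Variable n : nat.

Lemma big_valk (g : 'I_n.+1 -> R) (k : nat) :
  \big[op/idx]_(i | val i == k) g i = if (k <= n)%N then g (inord k) else idx.
Proof.
case: leqP => hk.
  rewrite (big_pred1 (inord k)) // => i /=.
  apply/eqP/eqP => [<-|->]; first by apply/val_inj; rewrite /= inordK // ltnS.
  by rewrite inordK // ltnS.
rewrite big_pred0 // => i /=; apply/negbTE; move: (ltn_ord i); rewrite ltnS.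
by apply: contraL => /eqP ->; rewrite -ltnNge.
Qed.

Lemma big_12 (g : 'I_n.+1 -> R) :
  (forall i : 'I_n.+1, val i != 1%N -> val i != 2%N -> g i = idx) ->
  \big[op/idx]_i g i =
  op (\big[op/idx]_(i | val i == 1%N) g i) (\big[op/idx]_(i | val i == 2%N) g i).
Proof.
move=> h; rewrite [in RHS]big_mkcond [X in op _ X]big_mkcond /= -big_split /=.
apply: eq_bigr => i _; case: (eqVneq (nat_of_ord i) 1%N) => [->|h1] /=.
  by rewrite Monoid.mulm1.
case: ifP => h2; first by rewrite Monoid.mul1m.
by rewrite Monoid.mul1m h // h2.
Qed.
End BigVal.

Lemma lam21E n k (i : 'I_n.+1) : (2 * k <= n)%N ->
  val (lam21 n k i) = if val i == 1%N then (n - 2 * k)%N else if val i == 2%N then k else 0%N.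
Proof.
move=> hk; rewrite /lam21 ffunE /=.
case: ifP => _; first by rewrite inordK //; lia.
case: ifP => _ //; by rewrite inordK //; lia.
Qed.

Lemma lam21_partn n k : (2 * k <= n)%N -> is_partn (lam21 n k).
Proof.
move=> hk; rewrite /is_partn lam21E //=.
rewrite big_12 => [|i h1 h2]; last by rewrite lam21E // (negbTE h1) (negbTE h2) muln0.
rewrite !big_valk.
case: (leqP 1 n) => h1; case: (leqP 2 n) => h2; rewrite ?lam21E //= ?inordK //=; apply/eqP; lia.
Qed.

Lemma plam_lam21 N n k : (2 * k <= n)%N ->
  plam N (lam21 n k) = psum N 1 ^+ (n - 2 * k) * psum N 2 ^+ k.
Proof.
move=> hk; rewrite /plam big_12 => [|i h1 h2]; last first.
  by rewrite lam21E // (negbTE h1) (negbTE h2) expr0.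
rewrite !big_valk.
case: (leqP 1 n) => h1; case: (leqP 2 n) => h2; rewrite ?lam21E //= ?inordK //=; try lia.
  have -> : k = 0%N by lia.
  by rewrite !expr0 !mulr1 subn0.
have -> : k = 0%N by lia.
have -> : n = 0%N by lia.
by rewrite !expr0 mulr1.
Qed.

Section Good.
Variable N : nat.
Implicit Types p q : {mpoly rat[N]}.

Definition Phi (a : 'X_{1..N}) : nat := (\sum_(j < N) (a j %/ 2))%N.

Definition Good p (c : nat) (b : bool) :=
  forall a, p@_a != 0 -> (c <= Phi a)%N /\ (b -> exists j, (3 <= a j)%N).

Lemma Phi_add (a b : 'X_{1..N}) : (Phi a + Phi b <= Phi (a + b)%MM)%N.
Proof.
rewrite /Phi -big_split /=; apply: leq_sum => j _; rewrite mnmDE.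
lia.
Qed.

Lemma Good_mul p q c1 c2 b1 b2 : Good p c1 b1 -> Good q c2 b2 ->
  Good (p * q) (c1 + c2) (b1 || b2).
Proof.
move=> hp hq a /mcoeffM_nz [b [c [-> hb hc]]].
have [hp1 hp2] := hp _ hb; have [hq1 hq2] := hq _ hc.
split; first by have := Phi_add b c; lia.
case/orP => [/hp2|/hq2] [j hj]; exists j; rewrite mnmDE; lia.
Qed.

Lemma Good1 : Good 1 0 false.
Proof. by move=> a _; split. Qed.

Lemma Good_exp p c b k : Good p c b -> Good (p ^+ k) (c * k) (b && (0 < k)%N).
Proof.
move=> hp; elim: k => [|k ih]; first by rewrite expr0 muln0 andbF; exact: Good1.
rewrite exprS mulnS.
have := Good_mul hp ih; rewrite /Good => h a ha; have [h1 h2] := h a ha.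
by split => // hb; apply: h2; case/andP: hb => ->.
Qed.

Lemma Good_psum i : Good (psum N i) (2 <= i)%N (3 <= i)%N.
Proof.
move=> a /mcoeff_sum_nz [j]; rewrite mcoeffXn.
rewrite pnatr_eq0 eqb0 negbK => /eqP <-.
have hj : ((U_(j) *+ i)%MM j = i)%N by rewrite mulmnE mnm1E eqxx mul1n.
split.
  rewrite /Phi (bigD1 j) //= hj; case: (leqP 2 i) => h //=.
  have : (1 <= i %/ 2)%N by rewrite divn_gt0.
  lia.
by move=> h3; exists j; rewrite hj.
Qed.

Lemma Good_plam n (m : {ffun 'I_n.+1 -> 'I_n.+1}) :
  Good (plam N m) (\sum_(i < n.+1) (2 <= i) * m i)%N
    (\big[orb/false]_(i < n.+1) ((3 <= i) && (0 < m i))%N).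
Proof.
rewrite /plam.
apply: (big_rec3 (fun p c b => Good p c b)); first exact: Good1.
move=> i p c b _ hg.
have := Good_mul (Good_exp (k:=m i) (@Good_psum (nat_of_ord i))) hg.
by rewrite mulnC.
Qed.

End Good.

Section Uniq.
Variables N n : nat.
Hypothesis hN : (n <= N)%N.

Definition alpha (a : nat) : 'X_{1..N} :=
  [multinom (if (j < a)%N then 2 else if (j < n - a)%N then 1 else 0)%N | j < N].

Definition beta (lo k d : nat) : 'X_{1..N} :=
  [multinom (d * ((lo <= j) && (j < lo + k)))%N | j < N].

Lemma sum_lt (M a : nat) : (\sum_(j < M) (j < a : nat))%N = minn M a.
Proof.
elim: M => [|M ih]; first by rewrite big_ord0 min0n.
rewrite big_ord_recr /= ih; case: (leqP a M) => h; lia.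
Qed.

Lemma Phi_alpha a : (Phi (alpha a) <= a)%N.
Proof.
rewrite /Phi; apply: (@leq_trans (\sum_(j < N) (j < a : nat))%N).
  apply: leq_sum => j _; rewrite mnmE.
  by case: ifP => h1 //; case: ifP.
by rewrite sum_lt geq_minr.
Qed.

Lemma alpha_le2 a j : (alpha a j <= 2)%N.
Proof. by rewrite mnmE; case: ifP => //; case: ifP. Qed.

Lemma psum_coef_ge d (j : 'I_N) : 1 <= (psum N d)@_(U_(j) *+ d).
Proof.
rewrite /psum raddf_sum /= (bigD1 j) //= mcoeffXn eqxx lerDl.
by apply: sumr_ge0 => i _; rewrite mcoeffXn ler0n.
Qed.

Lemma nonneg_psum d : nonneg (psum N d).
Proof.
move=> a; rewrite /psum raddf_sum; apply: sumr_ge0 => i _.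
by rewrite /= mcoeffXn ler0n.
Qed.

Lemma beta_pos d lo k : (lo + k <= N)%N -> 0 < (psum N d ^+ k)@_(beta lo k d).
Proof.
elim: k => [|k ih] hk.
  have -> : beta lo 0 d = 0%MM.
    apply/mnmP => j; rewrite mnmE mnm0E addn0; have -> : (lo <= j < lo)%N = false by lia. by rewrite muln0.
  by rewrite expr0 mcoeff1 eqxx ltr01.
have hl : (lo + k < N)%N by lia.
have -> : beta lo k.+1 d = (beta lo k d + U_(Ordinal hl) *+ d)%MM.
  apply/mnmP => j; rewrite mnmDE !mnmE mulmnE mnm1E /=.
  case: (eqVneq (Ordinal hl) j) => [<-|hne] /=.
    by rewrite leq_addr /= addnS ltnS leqnn ltnn /= muln1 muln0 mul1n.
  have hne' : (nat_of_ord j != lo + k)%N.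
    by apply: contra hne => /eqP h; apply/eqP/val_inj; rewrite /= h.
  by rewrite mul0n addn0 addnS ltnS (leq_eqVlt j) (negbTE hne').
rewrite exprSr.
apply: (lt_le_trans _ (mcoeffM_ge _ _ (nonneg_exp _ (@nonneg_psum d)) (@nonneg_psum d))).
apply: mulr_gt0; first by apply: ih; lia.
exact: (lt_le_trans ltr01 (psum_coef_ge _ _)).
Qed.

Lemma alpha_split a : (2 * a <= n)%N -> alpha a = (beta 0 a 2 + beta a (n - 2 * a) 1)%MM.
Proof.
move=> ha; apply/mnmP => j; rewrite mnmDE !mnmE.
case: (ltnP j a) => h1; first by [].
case: (ltnP j (n - a)) => h2 /=.
  have -> : (j < a + (n - 2 * a))%N by lia.
  done.
have -> : (j < a + (n - 2 * a))%N = false by lia.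
done.
Qed.

Lemma pos_lam21 a : (2 * a <= n)%N -> 0 < (plam N (lam21 n a))@_(alpha a).
Proof.
move=> ha; rewrite plam_lam21 // mulrC alpha_split //.
apply: (lt_le_trans _ (mcoeffM_ge _ _ (nonneg_exp _ (@nonneg_psum 2)) (nonneg_exp _ (@nonneg_psum 1)))).
apply: mulr_gt0; apply: beta_pos; lia.
Qed.

End Uniq.

Section Uniq2.
Variables N n : nat.
Hypothesis hN : (n <= N)%N.

Lemma sum_at (F : 'I_n.+1 -> nat) (i : 'I_n.+1) :
  (\sum_(k | val k == val i) F k)%N = F i.
Proof.
rewrite (big_pred1 i) // => k /=; apply/eqP/eqP => [h|->//]; exact: val_inj.
Qed.

Lemma coef_struct a (m : {ffun 'I_n.+1 -> 'I_n.+1}) : (2 * a <= n)%N -> is_partn m ->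
  (plam N m)@_(alpha N n a) != 0 -> exists2 j, (j <= a)%N & m = lam21 n j.
Proof.
move=> ha hm hnz; have [h1 h2] := Good_plam hnz.
have m3 : forall i : 'I_n.+1, (3 <= i)%N -> m i = 0%N :> nat.
  move=> i hi; apply/eqP; rewrite -leqn0 leqNgt; apply/negP => hp.
  have [|j hj] := h2; first by rewrite (bigD1 i) //= hi hp.
  by have := @alpha_le2 N n a j; lia.
set c := (\sum_(i < n.+1) (2 <= i) * m i)%N in h1.
have hc : (c <= a)%N by apply: leq_trans h1 (Phi_alpha hN a).
pose M k := (\sum_(i | val i == k) (m i : nat))%N.
have hM : forall i : 'I_n.+1, (m i : nat) = M (nat_of_ord i).
  by move=> i; rewrite -(sum_at (fun k => m k : nat) i).
have hc2 : c = M 2%N.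
  rewrite /c big_12 => [|i i1 i2]; last first.
    case: (leqP 3 i) => h3; first by rewrite m3 // muln0.
    have -> : (2 <= i)%N = false by move: i1 i2 => /= i1 i2; lia.
    done.
  rewrite /= [X in (X + _)%N]big1 => [|i /= /eqP ->] //; rewrite add0n /M.
  by apply: eq_big => // i /eqP ->; rewrite mul1n.
have hn : n = (M 1%N + 2 * M 2%N)%N.
  move/andP: hm => [_ /eqP hs]; rewrite -[in LHS]hs big_12 => [|i i1 i2]; last first.
    case: (leqP 3 i) => h3; first by rewrite m3 // muln0.
    have -> : nat_of_ord i = 0%N by move: i1 i2 => /= i1 i2; lia.
    done.
  rewrite /M big_distrr /=; congr (_ + _)%N; apply: eq_bigr => i /eqP -> //.
  by rewrite mul1n.
exists c => //; apply/ffunP => i; apply/val_inj; rewrite lam21E; last by lia.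
rewrite /=.
case: (eqVneq (nat_of_ord i) 1%N) => i1.
  by rewrite hM i1 hn hc2; lia.
case: (eqVneq (nat_of_ord i) 2%N) => i2.
  by rewrite hM i2 hc2.
case: (leqP 3 i) => h3; first by rewrite m3.
have i0 : i = ord0 by apply/val_inj => /=; lia.
by move/andP: hm => [/eqP h0 _]; rewrite i0 h0.
Qed.

Lemma uniq_coef (c c0 : {ffun 'I_n.+1 -> 'I_n.+1} -> rat) :
  \sum_(m | is_partn m) c m *: plam N m = \sum_(m | is_partn m) c0 m *: plam N m ->
  forall a, (2 * a <= n)%N -> c (lam21 n a) = c0 (lam21 n a).
Proof.
move=> E.
have E0 : \sum_(m | is_partn m) (c m - c0 m) *: plam N m = 0.
  by rewrite (eq_bigr (fun m => c m *: plam N m - c0 m *: plam N m)) => [|m _];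
     [rewrite sumrB E subrr | rewrite scalerBl].
elim/ltn_ind => a IH ha.
have := congr1 (mcoeff (alpha N n a)) E0.
rewrite raddf_sum mcoeff0 /= (bigD1 (lam21 n a)) ?lam21_partn //= big1 => [|m /andP [hm hne]].
  rewrite addr0 mcoeffZ => /eqP; rewrite mulf_eq0 => /orP [/eqP|]; first by move/subr0_eq.
  by rewrite gt_eqF // (pos_lam21 hN).
rewrite mcoeffZ; case: (eqVneq (plam N m)@_(alpha N n a) 0) => [->|hz]; first by rewrite mulr0.
have [j hj hmj] := coef_struct ha hm hz.
have hja : (j < a)%N by rewrite ltn_neqAle hj andbT; apply: contra hne => /eqP <-; rewrite hmj.
by rewrite hmj IH //; [rewrite subrr mul0r | lia].
Qed.

End Uniq2.

Section Graph.
Variable T : finType.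

Definition rS (S : {set {set T}}) : rel T := fun x y => [set x; y] \in S.

Lemma rS_sym S : ssrbool.symmetric (rS S).
Proof. by move=> x y; rewrite /rS setUC. Qed.

Definition cls S := equivalence_partition (connect (rS S)) [set: T].

Lemma cls_equiv S : {in [set: T] & &, equivalence_rel (connect (rS S))}.
Proof.
move=> x y z _ _ _; split; first exact: connect0.
move=> hxy; apply/idP/idP => h.
  by apply: connect_trans h; rewrite (sym_connect_sym (@rS_sym S)).
exact: connect_trans hxy h.
Qed.

Lemma cls_part S : partition (cls S) [set: T].
Proof. exact: equivalence_partitionP (@cls_equiv S). Qed.

Lemma cls_triv S : trivIset (cls S).
Proof. by case/and3P: (cls_part S). Qed.

Lemma cls_cover S : cover (cls S) = [set: T].
Proof. by case/and3P: (cls_part S) => /eqP. Qed.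

Lemma cls_n0 S : set0 \notin cls S.
Proof. by case/and3P: (cls_part S). Qed.

Lemma cls_pblock S x y : (y \in pblock (cls S) x) = connect (rS S) x y.
Proof. by apply: pblock_equivalence_partition; [exact: cls_equiv| |]. Qed.

Lemma pblock_cls S x : pblock (cls S) x \in cls S.
Proof. by apply: pblock_mem; rewrite cls_cover inE. Qed.

Lemma x_pblock S x : x \in pblock (cls S) x.
Proof. by rewrite mem_pblock cls_cover inE. Qed.

Lemma cls_nonempty S B : B \in cls S -> exists x, x \in B.
Proof.
move=> hB; have : B != set0 by apply: contraNneq (cls_n0 S) => <-.
by case/set0Pn => x hx; exists x.
Qed.

Lemma cls_card S B : B \in cls S -> (0 < #|B|)%N.
Proof. by move/cls_nonempty => [x hx]; apply/card_gt0P; exists x. Qed.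

Lemma card_cls S : (#|cls S| <= #|T|)%N.
Proof.
rewrite -cardsT (card_partition (cls_part S)) -sum1_card.
by apply: leq_sum => B /cls_card.
Qed.

Definition compat N S (k : {ffun T -> 'I_N}) := [forall x, forall y, rS S x y ==> (k x == k y)].

Lemma compat_conn N S (k : {ffun T -> 'I_N}) x y : compat S k -> connect (rS S) x y -> k x = k y.
Proof.
move=> /forallP hc /connectP [p hp ->]; elim: p x hp => [|z p ih] x //= /andP [hxz hp].
by rewrite -(ih z hp); apply/eqP; move: (hc x) => /forallP /(_ z) /implyP; apply.
Qed.

Definition typ S : {ffun 'I_#|T|.+1 -> 'I_#|T|.+1} :=
  [ffun i : 'I_#|T|.+1 => inord #|[set B in cls S | #|B| == nat_of_ord i]|].

Lemma typE S (i : 'I_#|T|.+1) : val (typ S i) = #|[set B in cls S | #|B| == i]|.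
Proof.
rewrite ffunE /= inordK // ltnS; apply: leq_trans (card_cls S).
by apply: subset_leq_card; apply/subsetP => B; rewrite inE => /andP [].
Qed.

Lemma plam_typ N S :
  plam N (typ S) = \prod_(B in cls S) psum N #|B|.
Proof.
set p := (fun B : {set T} => (inord #|B| : 'I_#|T|.+1)). rewrite [RHS](partition_big p predT) //=.
apply: eq_bigr => i _.
rewrite (eq_bigr (fun _ => psum N i)) => [|B /andP [_ /eqP <-]]; last first.
  by rewrite inordK // ltnS max_card.
rewrite prodr_const typE; congr (_ ^+ _); apply: eq_card => B; rewrite !inE.
rewrite [in RHS]unfold_in /= /p; case: (B \in cls S) => //=.
have hB : (#|B| < #|T|.+1)%N by rewrite ltnS max_card.
apply/eqP/eqP => h; first by apply: val_inj; rewrite /= inordK.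
by rewrite -h inordK.
Qed.

End Graph.

Section ClaimB.
Variables (T : finType) (N : nat) (j0 : 'I_N) (S : {set {set T}}).
Local Notation P := (cls S).

Definition hk (k : {ffun T -> 'I_N}) : {ffun {set T} -> 'I_N} :=
  [ffun B => if B \in P then (if [pick x in B] is Some x then k x else j0) else j0].
Definition hk' (f : {ffun {set T} -> 'I_N}) : {ffun T -> 'I_N} :=
  [ffun v => f (pblock P v)].

Lemma pick_cls B : B \in P -> exists2 x, [pick x in B] = Some x & x \in B.
Proof.
move=> hB; case: pickP => [x hx|h]; first by exists x.
by have [x hx] := cls_nonempty hB; move: (h x); rewrite hx.
Qed.

Lemma prod_cls_psum :
  \prod_(B in P) psum N #|B| =
  \sum_(k : {ffun T -> 'I_N} | compat S k) \prod_v 'X_(k v).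
Proof.
rewrite (eq_bigr (fun B : {set T} => \sum_(j < N) \prod_(v in B) ('X_j : {mpoly rat[N]}))) => [|B _]; last first.
  by rewrite /psum; apply: eq_bigr => j _; rewrite prodr_const.
rewrite (big_distr_big_dep j0 (fun B => B \in P) (fun _ _ => true)) /=.
rewrite (eq_bigr (fun f : {ffun {set T} -> 'I_N} => \prod_v ('X_(f (pblock P v)) : {mpoly rat[N]}))) => [|f _]; last first.
  rewrite -(eq_bigl _ _ (fun v => in_setT v)) -(cls_cover S) big_trivIset ?cls_triv //.
  apply: eq_bigr => B hB; apply: eq_bigr => v hv.
  by rewrite (def_pblock (cls_triv S) hB hv).
rewrite (reindex_onto hk hk') => [|f hf].
  apply: eq_big => [k|k /andP [_ /eqP hkk]]; last first.
    apply: eq_bigr => v _; congr ('X_ _).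
    by symmetry; rewrite -{1}hkk /hk' ffunE.
  have hfam : hk k \in pfamily j0 (fun B => B \in P) (fun _ _ => true).
    apply/pfamilyP; split => // ; apply/subsetP => B; rewrite inE /hk ffunE.
    by case: (B \in P); rewrite ?eqxx.
  rewrite hfam /=; apply/eqP/idP => [hkk|hc].
    apply/forallP => x; apply/forallP => y; apply/implyP => hxy.
    have hy : y \in pblock P x by rewrite cls_pblock; apply: connect1.
    by rewrite -hkk !ffunE (same_pblock (cls_triv S) hy).
  apply/ffunP => v; rewrite !ffunE pblock_cls.
  have [x -> hx] := pick_cls (pblock_cls S v).
  by apply: (compat_conn hc); rewrite -cls_pblock (same_pblock (cls_triv S) hx) x_pblock.
apply/ffunP => B; rewrite !ffunE; case: ifP => hB.
  have [x -> hx] := pick_cls hB.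
  by rewrite ffunE (def_pblock (cls_triv S) hB hx).
move/pfamilyP: hf => [/subsetP hsup _]; apply/eqP; apply: contraFT hB => hne.
apply: hsup; rewrite /support inE /=. by rewrite eq_sym.
Qed.

End ClaimB.

Lemma sum_subsets (A : finType) (M : {set A}) :
  \sum_(S : {set A} | S \subset M) (-1) ^+ #|S| = (M == set0)%:R :> rat.
Proof.
case: (eqVneq M set0) => [->|/set0Pn [x hx]].
  rewrite (big_pred1 set0) ?cards0 ?expr0 // => S; by rewrite subset0.
pose t (S : {set A}) := if x \in S then S :\ x else x |: S.
have tK : involutive t.
  move=> S; rewrite /t; case: (boolP (x \in S)) => h.
    by rewrite setD11 setD1K.
  by rewrite setU11 setU1K.
set s := (\sum_(S : {set A} | S \subset M) _).
have hs : s = - s.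
  rewrite {2}/s (reindex_inj (inv_inj tK)) /= -sumrN; apply: eq_big => S.
    rewrite /t; case: (boolP (x \in S)) => h.
      apply/idP/idP => hS.
        by apply: subset_trans hS; apply/subsetP => y /setD1P [].
      by rewrite -(setD1K h) subUset sub1set hx.
    by rewrite subUset sub1set hx.
  move=> _; rewrite /t; case: (boolP (x \in S)) => h.
    by rewrite [in LHS](cardsD1 x S) h exprS mulN1r.
  by rewrite cardsU1 h exprS mulN1r opprK.
have : s *+ 2 = 0 by rewrite mulr2n {1}hs addNr.
by move/eqP; rewrite mulrn_eq0 /= => /eqP ->.
Qed.

Section ClaimA.
Variables (T : finType) (e : rel T).
Hypothesis e_sym : ssrbool.symmetric e.
Hypothesis e_irr : irreflexive e.

Definition Eset : {set {set T}} := [set s | is_edge e s].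

Lemma edgeP s : is_edge e s -> exists x y, [/\ e x y, x != y & s = [set x; y]].
Proof.
case/existsP => x /existsP [y /andP [hxy /eqP ->]]; exists x, y; split => //.
by apply: contraTneq hxy => ->; rewrite e_irr.
Qed.

Lemma edge2 x y : is_edge e [set x; y] -> x != y.
Proof.
case/edgeP => a [b [_ hab h]]; apply/eqP => hxy; move: h; rewrite hxy setUid => h.
by have := cards2 a b; rewrite -h cards1 hab.
Qed.

Lemma edge_xy x y : e x y -> is_edge e [set x; y].
Proof. by move=> h; apply/existsP; exists x; apply/existsP; exists y; rewrite h eqxx. Qed.

Definition mono N (k : {ffun T -> 'I_N}) (s : {set T}) :=
  [forall u in s, forall v in s, k u == k v].
Definition Mono N (k : {ffun T -> 'I_N}) := [set s in Eset | mono k s].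

Lemma compat_mono N (S : {set {set T}}) (k : {ffun T -> 'I_N}) :
  S \subset Eset -> compat S k = (S \subset Mono k).
Proof.
move/subsetP => hS; apply/idP/subsetP => [hc s hs|hm].
  rewrite inE hS //=; have := hS s hs; rewrite inE => /edgeP [x [y [_ _ hsxy]]].
  have hxy : k x = k y by apply: (compat_conn hc); apply: connect1; rewrite /rS -hsxy.
  apply/forallP => u; apply/implyP; rewrite hsxy !inE => hu.
  apply/forallP => v; apply/implyP; rewrite !inE => hv.
  by case/orP: hu => /eqP ->; case/orP: hv => /eqP ->; rewrite ?hxy.
apply/forallP => x; apply/forallP => y; apply/implyP => hxy.
have := hm _ hxy; rewrite inE => /andP [_ /forallP /(_ x) /implyP].
by rewrite !inE eqxx => /(_ isT) /forallP /(_ y) /implyP; rewrite !inE eqxx orbT; apply.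
Qed.

Lemma proper_Mono N (k : {ffun T -> 'I_N}) : proper_col e k = (Mono k == set0).
Proof.
apply/idP/idP => [/forallP hp|/eqP h0].
  apply/eqP/setP => s; rewrite !inE; apply/negbTE; apply/negP => /andP [hE hm].
  case/edgeP: hE hm => x [y [hxy _ ->]] /forallP /(_ x) /implyP.
  rewrite !inE eqxx => /(_ isT) /forallP /(_ y) /implyP; rewrite !inE eqxx orbT => /(_ isT) hk.
  by move: (hp x) => /forallP /(_ y) /implyP /(_ hxy); rewrite hk.
apply/forallP => x; apply/forallP => y; apply/implyP => hxy; apply/negP => /eqP hk.
have : [set x; y] \in Mono k.
  rewrite inE [_ \in Eset]inE edge_xy //=; apply/forallP => u; apply/implyP; rewrite !inE => hu.
  apply/forallP => v; apply/implyP; rewrite !inE => hv.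
  by case/orP: hu => /eqP ->; case/orP: hv => /eqP ->; rewrite ?hk.
by rewrite h0 inE.
Qed.

Lemma claimA N :
  chromsym e N = \sum_(S : {set {set T}} | S \subset Eset) (-1) ^+ #|S| *:
     \sum_(k : {ffun T -> 'I_N} | compat S k) \prod_v 'X_(k v).
Proof.
rewrite /chromsym.
under [RHS]eq_bigr => S _ do rewrite scaler_sumr big_mkcond /=.
rewrite exchange_big /= [LHS]big_mkcond /=; apply: eq_bigr => k _.
rewrite -big_mkcondr /= -scaler_suml.
rewrite (eq_bigl (fun S : {set {set T}} => S \subset Mono k)) => [|S]; last first.
  case: (boolP (S \subset Eset)) => hS /=; first by rewrite compat_mono.
  apply/esym/negbTE; apply: contra hS => h; apply: subset_trans h _.
  by apply/subsetP => s; rewrite inE => /andP [].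
rewrite sum_subsets -proper_Mono; case: (proper_col e k); first by rewrite scale1r.
by rewrite scale0r.
Qed.

End ClaimA.

Section Rest.
Variables (T : finType).

Lemma cntE (S : {set {set T}}) i :
  #|[set B in cls S | #|B| == i]| = (\sum_(B in cls S) (#|B| == i : nat))%N.
Proof.
rewrite -sum1_card [RHS]big_mkcond [LHS]big_mkcond /=; apply: eq_bigr => B _.
by rewrite inE; case: (B \in cls S); case: (#|B| == i).
Qed.

Lemma typ_partn (S : {set {set T}}) : is_partn (typ S).
Proof.
apply/andP; split.
  rewrite typE cntE /= big1 // => B /cls_card; by case: #|B|.
apply/eqP.
rewrite (eq_bigr (fun i : 'I_#|T|.+1 => \sum_(B in cls S | #|B| == i) #|B|))%N => [|i _]; last first.
  rewrite typE cntE big_distrr /= [RHS]big_mkcondr /=; apply: eq_bigr => B _.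
  by case: eqP => [->|]; rewrite ?muln1 ?muln0.
rewrite -[in RHS]cardsT (card_partition (cls_part S)).
set p := (fun B : {set T} => (inord #|B| : 'I_#|T|.+1)). rewrite [RHS](partition_big p predT) //=.
apply: eq_bigr => i _; apply: eq_bigl => B.
case: (B \in cls S) => //=.
have hB : (#|B| < #|T|.+1)%N by rewrite ltnS max_card.
apply/eqP/eqP => h; first by apply: val_inj; rewrite /= inordK.
by rewrite -h inordK.
Qed.

Lemma claimB N (S : {set {set T}}) : (#|T| <= N)%N ->
  \sum_(k : {ffun T -> 'I_N} | compat S k) \prod_v 'X_(k v) = plam N (typ S).
Proof.
move=> hN; case: (posnP N) => [N0|Npos].
  have hT : #|T| = 0%N by lia.
  have hv : forall v : T, False by move=> v; have := card0_eq hT v.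
  rewrite [RHS]/plam [RHS]big1 => [|i _]; last first.
    have h0 : (typ S i : nat) = 0%N by have := ltn_ord (typ S i); lia.
    by rewrite h0 expr0.
  rewrite (eq_bigr (fun _ => 1)) => [|k _]; last by rewrite big1 // => v; case: (hv v).
  rewrite (eq_bigl predT) => [|k]; last by apply/forallP => v; case: (hv v).
  rewrite sumr_const card_ffun card_ord hT /=.
  by subst N.
by rewrite plam_typ (prod_cls_psum (Ordinal Npos)).
Qed.

End Rest.

Section ClaimD.
Variables (T : finType) (e : rel T).
Hypothesis e_sym : ssrbool.symmetric e.
Hypothesis e_irr : irreflexive e.

Lemma matchingP (M : {set {set T}}) : is_matching e M ->
  (forall s, s \in M -> is_edge e s) /\
  (forall s t, s \in M -> t \in M -> s != t -> [disjoint s & t]).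
Proof.
case/andP => /forallP h1 /forallP h2; split.
  by move=> s hs; move: (h1 s) => /implyP; apply.
move=> s t hs ht hst; move: (h2 s) => /implyP /(_ hs) /forallP /(_ t) /implyP /(_ ht) /implyP.
by apply.
Qed.

Lemma matching_sub M : is_matching e M -> M \subset Eset e.
Proof. by case/matchingP => h _; apply/subsetP => s hs; rewrite inE h. Qed.

Lemma rr (S : {set {set T}}) x y z : is_matching e S -> rS S x y -> rS S y z -> x = z.
Proof.
move=> hm hxy hyz; have [hE hd] := matchingP hm.
case: (eqVneq [set x; y] [set y; z]) => h.
  have : x \in [set y; z] by rewrite -h set21.
  rewrite !inE => /orP [/eqP hx|/eqP //].
  by move: (edge2 e_irr (hE _ hxy)); rewrite hx eqxx.
have := disjointFr (hd _ _ hxy hyz h) (_ : y \in [set x; y]).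
by rewrite !inE !eqxx orbT => /(_ isT).
Qed.

Lemma conn_m (S : {set {set T}}) x y : is_matching e S -> connect (rS S) x y -> x = y \/ rS S x y.
Proof.
move=> hm /connectP [p hp ->]; elim: p x hp => [|w p ih] x /=; first by left.
case/andP => hxw hp; case: (ih w hp) => [<-|h]; first by right.
by left; apply: rr hm hxw h.
Qed.

Lemma blocks_le2 (S : {set {set T}}) B : is_matching e S -> B \in cls S -> (#|B| <= 2)%N.
Proof.
move=> hm hB; have [x hx] := cls_nonempty hB.
have hBx : B = pblock (cls S) x by rewrite (def_pblock (cls_triv S) hB hx).
have hc : forall u, u \in B -> u = x \/ rS S x u.
  move=> u hu; case: (conn_m hm (_ : connect (rS S) x u)) => [|<-|]; try by [left|right].
  by rewrite -cls_pblock -hBx.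
case: (pickP [pred w | (w \in B) && (w != x)]) => [w /andP [hw hwx] | hnone].
  have hxw : rS S x w by case: (hc w hw) => // h; rewrite h eqxx in hwx.
  apply: (@leq_trans #|[set x; w]|); last by rewrite cards2; case: (x != w).
  apply: subset_leq_card; apply/subsetP => u hu; rewrite !inE.
  case: (hc u hu) => [->|h]; first by rewrite eqxx.
  by rewrite (rr hm (_ : rS S u x) hxw) ?eqxx ?orbT // rS_sym.
apply: (@leq_trans #|[set x]|); last by rewrite cards1.
apply: subset_leq_card; apply/subsetP => u hu; rewrite !inE.
by move: (hnone u) => /=; rewrite hu /= => /negbT; rewrite negbK.
Qed.

Lemma D1 (S : {set {set T}}) : S \subset Eset e -> (forall B, B \in cls S -> (#|B| <= 2)%N) ->
  S = [set B in cls S | #|B| == 2].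
Proof.
move=> /subsetP hE hle; apply/setP => s; rewrite inE; apply/idP/andP => [hs|[hB h2]].
  have := hE s hs; rewrite inE => /(edgeP e_irr) [x [y [_ hxy hsxy]]].
  have hy : y \in pblock (cls S) x by rewrite cls_pblock; apply: connect1; rewrite /rS -hsxy.
  have hsub : s \subset pblock (cls S) x.
    by rewrite hsxy; apply/subsetP => u; rewrite !inE => /orP [/eqP ->|/eqP ->]; [exact: x_pblock | exact: hy].
  have hcs : #|s| = 2%N by rewrite hsxy cards2 hxy.
  have : s == pblock (cls S) x.
    by rewrite eqEcard hsub hcs hle // pblock_cls.
  by move/eqP => hsp; split; [rewrite hsp pblock_cls | rewrite hcs].
case/cards2P: h2 => x [y [hxy hBxy]].
have hx : x \in s by rewrite hBxy !inE eqxx.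
have hBp : pblock (cls S) x = s by apply: def_pblock (cls_triv S) hB hx.
have : connect (rS S) x y by rewrite -cls_pblock hBp hBxy !inE eqxx orbT.
case/connectP => -[|z p] /=; first by move=> _ hy; rewrite hy eqxx in hxy.
case/andP => hxz _ _.
have hz : z \in s by rewrite -hBp cls_pblock; apply: connect1.
move: hz; rewrite hBxy !inE => /orP [/eqP hzx|/eqP hzy].
  have := hE _ hxz; rewrite inE => /(edge2 e_irr); by rewrite hzx eqxx.
by rewrite -hzy.
Qed.

End ClaimD.

Section Typ.
Variables (T : finType) (e : rel T).
Hypothesis e_irr : irreflexive e.

Lemma cnt_in (S : {set {set T}}) B : B \in cls S ->
  (0 < #|[set B' in cls S | #|B'| == #|B|]|)%N.
Proof. by move=> hB; apply/card_gt0P; exists B; rewrite inE hB eqxx. Qed.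

Lemma sum12 (S : {set {set T}}) : (forall B, B \in cls S -> (#|B| <= 2)%N) ->
  #|T| = (#|[set B in cls S | #|B| == 1%N]| + 2 * #|[set B in cls S | #|B| == 2]|)%N.
Proof.
move=> hle; rewrite -cardsT (card_partition (cls_part S)) !cntE big_distrr -big_split /=.
apply: eq_bigr => B hB; have := hle B hB; have := cls_card hB.
by case: #|B| => [|[|[|]]].
Qed.

Lemma typ_lam21 (S : {set {set T}}) a : S \subset Eset e -> (2 * a <= #|T|)%N ->
  (typ S == lam21 #|T| a) = is_matching e S && (#|S| == a).
Proof.
move=> hE ha; apply/eqP/andP => [h|[hm /eqP hSa]].
  have hle : forall B, B \in cls S -> (#|B| <= 2)%N.
    move=> B hB; rewrite leqNgt; apply/negP => h3.
    have hBn : (#|B| < #|T|.+1)%N by rewrite ltnS max_card.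
    have := typE S (Ordinal hBn); rewrite h lam21E //=.
    have -> : (#|B| == 1%N) = false by apply/negbTE; lia.
    have -> : (#|B| == 2%N) = false by apply/negbTE; lia.
    by move/esym/eqP; rewrite cards_eq0 => /eqP h0; have := cnt_in hB; rewrite h0 cards0.
  have hS := D1 e_irr hE hle.
  split.
    apply/andP; split.
      by apply/forallP => s; apply/implyP => hs; move/subsetP: hE => /(_ s hs); rewrite inE.
    apply/forallP => s; apply/implyP => hs; apply/forallP => t; apply/implyP => ht; apply/implyP => hst.
    move: hs ht; rewrite hS !inE => /andP [hs _] /andP [ht _].
    by move/trivIsetP: (cls_triv S) => /(_ s t hs ht hst).
  rewrite hS; case: (leqP 2 #|T|) => h2.
    have h2n : (2 < #|T|.+1)%N by lia.
    by have := typE S (Ordinal h2n); rewrite h lam21E //= => ->.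
  have -> : a = 0%N by lia.
  rewrite cards_eq0; apply/eqP/setP => B; rewrite !inE; apply/negbTE; apply/negP => /andP [_ /eqP hB2].
  by have := max_card B; rewrite hB2; lia.
have hle : forall B, B \in cls S -> (#|B| <= 2)%N by move=> B; apply: blocks_le2.
have hS := D1 e_irr hE hle.
have h2 : #|[set B in cls S | #|B| == 2]| = a by rewrite -hS.
have hsum := sum12 hle; rewrite h2 in hsum.
apply/ffunP => i; apply/val_inj; rewrite typE lam21E //.
case: (eqVneq (nat_of_ord i) 1%N) => [->|i1] /=; first by rewrite hsum addnK.
case: (eqVneq (nat_of_ord i) 2%N) => [->|i2] /=; first by [].
apply/eqP; rewrite cards_eq0; apply/eqP/setP => B; rewrite !inE; apply/negbTE; apply/negP => /andP [hB /eqP hBi].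
have := hle B hB; have := cls_card hB; rewrite hBi.
by move: i1 i2; case: (nat_of_ord i) => [|[|[|]]].
Qed.

End Typ.

Definition c0 (T : finType) (e : rel T) (m : {ffun 'I_#|T|.+1 -> 'I_#|T|.+1}) : rat :=
  \sum_(S : {set {set T}} | S \subset Eset e) ((typ S == m)%:R * (-1) ^+ #|S|).

Lemma exp_c0 (T : finType) (e : rel T) (e_irr : irreflexive e) N :
  (#|T| <= N)%N -> pexpansion e N (c0 e).
Proof.
move=> hN; rewrite /pexpansion (claimA e_irr N).
under eq_bigr => S _ do rewrite claimB //.
rewrite /c0; under [RHS]eq_bigr => m _ do rewrite scaler_suml.
rewrite exchange_big /=; apply: eq_bigr => S hS.
rewrite (bigD1 (typ S)) ?typ_partn //= eqxx mul1r big1 ?addr0 // => m /andP [_ hm].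
by rewrite eq_sym (negbTE hm) mul0r scale0r.
Qed.

Lemma c0_lam21 (T : finType) (e : rel T) (e_irr : irreflexive e) a :
  (2 * a <= #|T|)%N -> c0 e (lam21 #|T| a) = (-1) ^+ a * (nmatch e a)%:R.
Proof.
move=> ha; rewrite /c0 big_mkcond /=.
rewrite (eq_bigr (fun S => if is_matching e S && (#|S| == a) then (-1) ^+ a else 0)) => [|S _].
  rewrite -big_mkcond /=.
  rewrite (eq_bigl (fun S => S \in [set M | is_matching e M && (#|M| == a)])) => [|S]; last by rewrite inE.
  by rewrite sumr_const mulr_natr.
case: (boolP (S \subset Eset e)) => hS.
  rewrite (typ_lam21 e_irr) //; case: (boolP (is_matching e S && (#|S| == a))) => h /=.
    by case/andP: h => _ /eqP ->; rewrite mul1r.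
  by rewrite mul0r.
case: (boolP (is_matching e S)) => hm //=.
by case/negP: hS; apply: matching_sub hm.
Qed.

Lemma nmatch0 (T : finType) (e : rel T) (e_irr : irreflexive e) a :
  (#|T| < 2 * a)%N -> nmatch e a = 0%N.
Proof.
move=> ha; rewrite /nmatch; apply/eqP; rewrite cards_eq0; apply/eqP/setP => M.
rewrite !inE; apply/negbTE/negP => /andP [hm /eqP hMa].
have [hE hd] := matchingP hm.
have ht : trivIset M by apply/trivIsetP => s t hs ht; apply: hd.
have hc : #|cover M| = (\sum_(s in M) #|s|)%N.
  by have [_] := leq_card_cover M; rewrite ht => /eqP.
have hs : (\sum_(s in M) #|s|)%N = (#|M| * 2)%N.
  rewrite -sum_nat_const; apply: eq_bigr => s hs.
  by have [x [y [_ hxy ->]]] := edgeP e_irr (hE s hs); rewrite cards2 hxy.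
have := max_card (cover M); rewrite hc hs hMa; lia.
Qed.

Theorem theorem1 (T : finType) (e : rel T)
  (e_sym : ssrbool.symmetric e) (e_irr : irreflexive e) (e_forest : forest e)
  (N : nat) (HN : (#|T| <= N)%N) :
  (exists c, pexpansion e N c) /\
  (forall c, pexpansion e N c ->
     (forall k : nat, (2 * k <= #|T|)%N ->
        c (lam21 #|T| k) = (-1) ^+ k * (nmatch e k)%:R) /\
     matching_poly e =
       \sum_(k < #|T|.+1 | (2 * k <= #|T|)%N) `|c (lam21 #|T| k)| *: 'X^k).
Proof.
split; first by exists (c0 e); apply: exp_c0.
move=> c hc.
have key : forall k : nat, (2 * k <= #|T|)%N ->
    c (lam21 #|T| k) = (-1) ^+ k * (nmatch e k)%:R.
  move=> k hk; rewrite -(c0_lam21 e_irr hk).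
  apply: (uniq_coef HN) => //.
  by rewrite -hc -(exp_c0 e_irr HN).
split => //.
rewrite /matching_poly [RHS]big_mkcond /=; apply: eq_bigr => k _.
case: (leqP (2 * k) #|T|) => hk.
  by rewrite key // normrM normrX normrN1 expr1n mul1r normr_nat.
by rewrite nmatch0 // scale0r.
Qed.
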